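(* Let $R$ be a (not necessarily commutative) Noetherian positively graded connected $\mathbb{K}$-algebra generated in degree $1$, let $P$ be a homogeneous prime ideal of $R$ with $P\neq R_+$, and let $M$ be a graded right $R$-module. Then $\mathrm{Hom}_{Gr(R)}(M,E^g(R/P))=0$ if and only if $\overline{\mathrm{Hom}}(M,E^g(R/P))=0$.
   Context: $\mathbb{K}$ is a field; connected means $R_0=\mathbb{K}$; $R_+=\bigoplus_{i\geq1}R_i$. $Gr(R)$ is the category of graded right $R$-modules with degree-preserving maps, $E^g$ the injective envelope in $Gr(R)$, and $\overline{\mathrm{Hom}}(M,N)=\bigoplus_{i\in\mathbb{Z}}\mathrm{Hom}_{Gr(R)}(M,N(i))$ with $N(i)$ the grading shift. *)

(* Defs.v *)
From HB Require Import structures.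
From mathcomp Require Import all_boot all_order all_algebra.
Set Implicit Arguments. Unset Strict Implicit. Unset Printing Implicit Defensive.
Import Order.TTheory GRing.Theory Num.Theory.
Local Open Scope ring_scope.

(* Graded algebra data: K a field, R a K-algebra (not necessarily
   commutative; scalars central), Rdeg i = the K-subspace R_i, i : nat. *)
Section Graded.
Variables (K : fieldType) (R : algType K) (Rdeg : nat -> R -> Prop).

Definition positively_graded : Prop :=
  (forall i, Rdeg i 0) /\
  (forall i a b, Rdeg i a -> Rdeg i b -> Rdeg i (a + b)) /\
  (forall i (k : K) a, Rdeg i a -> Rdeg i (k *: a)) /\
  (forall i j a b, Rdeg i a -> Rdeg j b -> Rdeg (i + j)%N (a * b)) /\
  (forall a, exists (s : seq nat) (x : nat -> R),
       uniq s /\ (forall i, Rdeg i (x i)) /\ a = \sum_(i <- s) x i) /\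
  (forall (s : seq nat) (x : nat -> R), uniq s -> (forall i, Rdeg i (x i)) ->
       \sum_(i <- s) x i = 0 -> forall i, i \in s -> x i = 0).

Definition connected : Prop := forall a, Rdeg 0 a <-> exists k : K, a = k%:A.

Definition generated_in_degree1 : Prop :=
  forall S : R -> Prop,
    S 1 -> (forall a b, S a -> S b -> S (a + b)) ->
    (forall (k : K) a, S a -> S (k *: a)) ->
    (forall a b, S a -> S b -> S (a * b)) ->
    (forall a, Rdeg 1 a -> S a) -> forall a, S a.

Definition right_ideal (I : R -> Prop) : Prop :=
  I 0 /\ (forall a b, I a -> I b -> I (a + b)) /\ (forall a r, I a -> I (a * r)).
Definition left_ideal (I : R -> Prop) : Prop :=
  I 0 /\ (forall a b, I a -> I b -> I (a + b)) /\ (forall a r, I a -> I (r * a)).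
Definition two_sided_ideal (I : R -> Prop) : Prop := right_ideal I /\ left_ideal I.

Definition acc (isId : (R -> Prop) -> Prop) : Prop :=
  forall I : nat -> R -> Prop, (forall n, isId (I n)) ->
    (forall n a, I n a -> I n.+1 a) ->
    exists N, forall n, (N <= n)%N -> forall a, I n a -> I N a.

Definition noetherian : Prop := acc right_ideal /\ acc left_ideal.

Definition homogeneous_ideal (P : R -> Prop) : Prop :=
  two_sided_ideal P /\
  forall (s : seq nat) (x : nat -> R), uniq s -> (forall i, Rdeg i (x i)) ->
    P (\sum_(i <- s) x i) -> forall i, i \in s -> P (x i).

Definition prime_ideal (P : R -> Prop) : Prop :=
  two_sided_ideal P /\ (exists a, ~ P a) /\
  forall I J : R -> Prop, two_sided_ideal I -> two_sided_ideal J ->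
    (forall a b, I a -> J b -> P (a * b)) ->
    (forall a, I a -> P a) \/ (forall a, J a -> P a).

Definition Rplus (a : R) : Prop :=
  exists (s : seq nat) (x : nat -> R),
    uniq s /\ (0%N \notin s) /\ (forall i, Rdeg i (x i)) /\ a = \sum_(i <- s) x i.

Record grmod := GrMod {
  gm_car :> zmodType;
  gm_act : gm_car -> R -> gm_car;
  gm_deg : int -> gm_car -> Prop;
  gm_act1 : forall m, gm_act m 1 = m;
  gm_actA : forall m a b, gm_act (gm_act m a) b = gm_act m (a * b);
  gm_actDl : forall m n a, gm_act (m + n) a = gm_act m a + gm_act n a;
  gm_actDr : forall m a b, gm_act m (a + b) = gm_act m a + gm_act m b;
  gm_deg0 : forall j, gm_deg j 0;
  gm_degB : forall j m n, gm_deg j m -> gm_deg j n -> gm_deg j (m - n);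
  gm_deg_act : forall i j a m, Rdeg i a -> gm_deg j m -> gm_deg (j + i%:Z) (gm_act m a);
  gm_decomp : forall m, exists (s : seq int) (x : int -> gm_car),
       uniq s /\ (forall j, gm_deg j (x j)) /\ m = \sum_(j <- s) x j;
  gm_indep : forall (s : seq int) (x : int -> gm_car), uniq s ->
       (forall j, gm_deg j (x j)) -> \sum_(j <- s) x j = 0 ->
       forall j, j \in s -> x j = 0
}.
Arguments gm_deg : clear implicits.
Arguments gm_act : clear implicits.


(* Hom_{Gr(R)}(M, N(i)): R-linear maps f with f(M_j) <= N(i)_j = N_{j+i} *)
Record grhom (M N : grmod) (i : int) := GrHom {
  hfun :> M -> N;
  hfunD : forall x y, hfun (x + y) = hfun x + hfun y;
  hfunR : forall x a, hfun (gm_act M x a) = gm_act N (hfun x) a;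
  hfun_deg : forall j x, gm_deg M j x -> gm_deg N (j + i) (hfun x)
}.
Arguments gm_deg : clear implicits.
Arguments gm_act : clear implicits.


Definition GrHom_zero (M N : grmod) : Prop :=
  forall (f : grhom M N 0) (m : M), f m = 0.

(* \bar{Hom}(M, N) = (+)_i Hom_{Gr(R)}(M, N(i)) = 0 *)
Definition HomBar_zero (M N : grmod) : Prop :=
  forall (i : int) (f : grhom M N i) (m : M), f m = 0.

Definition gr_injective (E : grmod) : Prop :=
  forall (A B : grmod) (f : grhom A B 0), injective f ->
    forall g : grhom A E 0, exists h : grhom B E 0, forall a, h (f a) = g a.

Definition gr_submodule (M : grmod) (S : M -> Prop) : Prop :=
  S 0 /\ (forall m n, S m -> S n -> S (m - n)) /\
  (forall m a, S m -> S (gm_act M m a)) /\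
  forall (s : seq int) (x : int -> M), uniq s -> (forall j, gm_deg M j (x j)) ->
    S (\sum_(j <- s) x j) -> forall j, j \in s -> S (x j).

(* E^g(Q): E injective in Gr(R), iota : Q -> E a monomorphism in Gr(R)
   which is essential (every nonzero graded submodule of E meets its image) *)
Definition gr_injective_envelope (Q E : grmod) (iota : grhom Q E 0) : Prop :=
  injective iota /\ gr_injective E /\
  forall S : E -> Prop, gr_submodule S -> (exists e, S e /\ e <> 0) ->
    exists q, S (iota q) /\ iota q <> 0.

(* Q is (isomorphic in Gr(R) to) R/P: pi : R_R -> Q is a surjective
   degree-preserving R-linear map with kernel P *)
Definition is_quotient_by (P : R -> Prop) (Q : grmod) (pi : R -> Q) : Prop :=
  (forall a b, pi (a + b) = pi a + pi b) /\
  (forall a b, pi (a * b) = gm_act Q (pi a) b) /\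
  (forall i a, Rdeg i a -> gm_deg Q i%:Z (pi a)) /\
  (forall q, exists a, pi a = q) /\
  (forall a, pi a = 0 <-> P a).

End Graded.

(* Main.v *)
From HB Require Import structures.
Require Import Defs.
From mathcomp Require Import all_boot all_order all_algebra.
From mathcomp Require Import zify.
From Stdlib Require Import ClassicalEpsilon Classical.
Set Implicit Arguments. Unset Strict Implicit. Unset Printing Implicit Defensive.
Import GRing.Theory.
Local Open Scope ring_scope.

Record zpred (V : zmodType) := ZPred {
  zp :> pred V; zp0 : zp 0; zpB : forall x y, zp x -> zp y -> zp (x - y) }.

Section SubZ.
Variables (V : zmodType) (S : zpred V).
Definition subz := {x : V | zp S x}.
Lemma zpN x : zp S x -> zp S (- x).
Proof. by move=> h; rewrite -sub0r; apply: zpB => //; apply: zp0. Qed.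
Lemma zpD x y : zp S x -> zp S y -> zp S (x + y).
Proof. by move=> hx hy; rewrite -[y]opprK; apply: zpB => //; apply: zpN. Qed.
End SubZ.

HB.instance Definition _ (V : zmodType) (S : zpred V) := Choice.on (subz S).
Definition sz0 (V : zmodType) (S : zpred V) : subz S := exist _ 0 (zp0 S).
Definition szN (V : zmodType) (S : zpred V) (x : subz S) : subz S := exist _ (- val x) (zpN (valP x)).
Definition szD (V : zmodType) (S : zpred V) (x y : subz S) : subz S := exist _ (val x + val y) (zpD (valP x) (valP y)).
Lemma szA (V : zmodType) (S : zpred V) : associative (@szD V S).
Proof. by move=> x y z; apply: val_inj; rewrite /= addrA. Qed.
Lemma szC (V : zmodType) (S : zpred V) : commutative (@szD V S).
Proof. by move=> x y; apply: val_inj; rewrite /= addrC. Qed.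
Lemma sz0l (V : zmodType) (S : zpred V) : left_id (@sz0 V S) (@szD V S).
Proof. by move=> x; apply: val_inj; rewrite /= add0r. Qed.
Lemma szNl (V : zmodType) (S : zpred V) : left_inverse (@sz0 V S) (@szN V S) (@szD V S).
Proof. by move=> x; apply: val_inj; rewrite /= addNr. Qed.
HB.instance Definition _ (V : zmodType) (S : zpred V) :=
  GRing.isZmodule.Build (subz S) (@szA V S) (@szC V S) (@sz0l V S) (@szNl V S).

Lemma val_szB (V : zmodType) (S : zpred V) (x y : subz S) : val (x - y) = val x - val y.
Proof. by []. Qed.
Lemma val_szD (V : zmodType) (S : zpred V) (x y : subz S) : val (x + y) = val x + val y.
Proof. by []. Qed.
Lemma val_sz0 (V : zmodType) (S : zpred V) : val (0 : subz S) = 0.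
Proof. by []. Qed.
Lemma val_szsum (V : zmodType) (S : zpred V) (I : Type) (l : seq I) (F : I -> subz S) :
  val (\sum_(i <- l) F i) = \sum_(i <- l) val (F i).
Proof.
elim: l => [|a l IH]; first by rewrite !big_nil.
by rewrite !big_cons val_szD IH.
Qed.

Definition pb (P : Prop) : bool := if excluded_middle_informative P then true else false.
Lemma pbE (P : Prop) : pb P <-> P.
Proof. by rewrite /pb; case: excluded_middle_informative. Qed.

Section Gen.
Variables (K : fieldType) (R : algType K) (Rdeg : nat -> R -> Prop).

Section GM.
Variable G : grmod Rdeg.
Lemma degN j (x : G) : gm_deg j x -> gm_deg j (- x).
Proof. by move=> h; rewrite -sub0r; apply: gm_degB => //; apply: gm_deg0. Qed.
Lemma degD j (x y : G) : gm_deg j x -> gm_deg j y -> gm_deg j (x + y).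
Proof. by move=> hx hy; rewrite -[y]opprK; apply: gm_degB => //; apply: degN. Qed.
Lemma deg_sum j (I : Type) (l : seq I) (F : I -> G) :
  (forall i, gm_deg j (F i)) -> gm_deg j (\sum_(i <- l) F i).
Proof.
move=> h; elim: l => [|a l IH]; first by rewrite big_nil; apply: gm_deg0.
by rewrite big_cons; apply: degD.
Qed.

Lemma deg_sum_seq j (I : eqType) (l : seq I) (F : I -> G) :
  (forall i, i \in l -> gm_deg j (F i)) -> gm_deg j (\sum_(i <- l) F i).
Proof.
elim: l => [|a l IH] h; first by rewrite big_nil; apply: gm_deg0.
rewrite big_cons; apply: degD; first by apply: h; rewrite inE eqxx.
by apply: IH => i il; apply: h; rewrite inE il orbT.
Qed.

Lemma sum_sub_filter (l1 L : seq int) (F : int -> G) :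
  uniq l1 -> uniq L -> {subset l1 <= L} ->
  \sum_(j <- L) (if j \in l1 then F j else 0) = \sum_(j <- l1) F j.
Proof.
move=> u1 uL sub; rewrite -big_mkcond -big_filter; apply: perm_big.
apply: uniq_perm; first exact: filter_uniq.
  done.
by move=> j; rewrite mem_filter; case jl: (j \in l1) => //=; rewrite sub.
Qed.

Lemma comp_eq (l1 l2 : seq int) (y1 y2 : int -> G) :
  uniq l1 -> uniq l2 -> (forall j, gm_deg j (y1 j)) -> (forall j, gm_deg j (y2 j)) ->
  \sum_(j <- l1) y1 j = \sum_(j <- l2) y2 j ->
  forall j, j \in l1 -> y1 j = (if j \in l2 then y2 j else 0).
Proof.
move=> u1 u2 d1 d2 e j jl.
set L := undup (l1 ++ l2).
have uL : uniq L by apply: undup_uniq.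
have s1 : {subset l1 <= L} by move=> i il; rewrite mem_undup mem_cat il.
have s2 : {subset l2 <= L} by move=> i il; rewrite mem_undup mem_cat il orbT.
pose z i := (if i \in l1 then y1 i else 0) - (if i \in l2 then y2 i else 0).
have hz : \sum_(i <- L) z i = 0.
  by rewrite /z sumrB !sum_sub_filter // e subrr.
have dz : forall i, gm_deg i (z i).
  move=> i; apply: gm_degB; [case: (i \in l1)|case: (i \in l2)] => //; exact: gm_deg0.
have := gm_indep uL dz hz (s1 _ jl).
by rewrite /z jl => /eqP; rewrite subr_eq0 => /eqP.
Qed.
End GM.
End Gen.
Section Gen2.
Variables (K : fieldType) (R : algType K) (Rdeg : nat -> R -> Prop).

Section Shift.
Variables (G : grmod Rdeg) (k : int).
Let dg := fun (j : int) (x : G) => gm_deg (j + k) x.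
Lemma sh_deg0 j : dg j 0. Proof. exact: gm_deg0. Qed.
Lemma sh_degB j (m n : G) : dg j m -> dg j n -> dg j (m - n).
Proof. exact: gm_degB. Qed.
Lemma sh_deg_act i j a (m : G) : Rdeg i a -> dg j m -> dg (j + i%:Z) (@gm_act _ _ _ G m a).
Proof. by move=> ha hm; rewrite /dg addrAC; apply: gm_deg_act. Qed.
Lemma sh_decomp (m : G) : exists (s : seq int) (x : int -> G),
  uniq s /\ (forall j, dg j (x j)) /\ m = \sum_(j <- s) x j.
Proof.
have [s [x [us [dx ->]]]] := gm_decomp m.
exists (map (fun j => j - k) s), (fun j => x (j + k)); split.
  by rewrite map_inj_uniq // => a b /addIr.
split; first by move=> j; rewrite /dg.
rewrite big_map; elim: (s) => [|a t IH]; first by rewrite !big_nil.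
by rewrite !big_cons IH subrK.
Qed.
Lemma sh_indep (s : seq int) (x : int -> G) : uniq s ->
  (forall j, dg j (x j)) -> \sum_(j <- s) x j = 0 -> forall j, j \in s -> x j = 0.
Proof.
move=> us dx e j js.
have := @gm_indep _ _ _ G (map (fun j => j + k) s) (fun j => x (j - k)).
rewrite map_inj_uniq; last by move=> a b /addIr.
move=> /(_ us) H.
have := H _ _ (j + k).
rewrite addrK; apply.
- by move=> i; have := dx (i - k); rewrite /dg subrK.
- rewrite big_map -[RHS]e; elim: (s) => [|a t IH]; first by rewrite !big_nil.
  by rewrite !big_cons IH addrK.
- by apply: map_f.
Qed.
Definition shift : grmod Rdeg :=
  @GrMod _ _ Rdeg G (@gm_act _ _ _ G) dg (@gm_act1 _ _ _ G) (@gm_actA _ _ _ G)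
   (@gm_actDl _ _ _ G) (@gm_actDr _ _ _ G) sh_deg0 sh_degB sh_deg_act sh_decomp sh_indep.
End Shift.

Definition toS (G H : grmod Rdeg) i (f : grhom G H i) : grhom (shift G (- i)) H 0.
Proof.
refine (@GrHom _ _ _ (shift G (-i)) H 0 (hfun f) (hfunD f) (hfunR f) _).
move=> j x /= hx; rewrite addr0; have := hfun_deg f hx; by rewrite subrK.
Defined.
Definition fromS (G H : grmod Rdeg) i (f : grhom (shift G (- i)) H 0) : grhom G H i.
Proof.
refine (@GrHom _ _ _ G H i (hfun f) (hfunD f) (hfunR f) _).
move=> j x hx; have := @hfun_deg _ _ _ _ _ _ f (j + i) x; rewrite addr0; apply.
by rewrite /= addrK.
Defined.
Definition shiftH (G H : grmod Rdeg) k (f : grhom G H 0) : grhom (shift G k) (shift H k) 0.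
Proof.
refine (@GrHom _ _ _ (shift G k) (shift H k) 0 (hfun f) (hfunD f) (hfunR f) _).
move=> j x /= hx; have := hfun_deg f hx; by rewrite !addr0.
Defined.
Definition compH (A B C : grmod Rdeg) i l (f : grhom A B i) (g : grhom B C l) : grhom A C (i + l).
Proof.
refine (@GrHom _ _ _ A C (i + l) (fun x => g (f x)) _ _ _).
- by move=> x y; rewrite !hfunD.
- by move=> x a; rewrite !hfunR.
- by move=> j x hx; rewrite addrA; apply: hfun_deg; apply: hfun_deg.
Defined.

Lemma hf0 (G H : grmod Rdeg) i (f : grhom G H i) : f 0 = 0.
Proof. by apply: (@addrI _ (f 0)); rewrite -hfunD !addr0. Qed.
Lemma hfN (G H : grmod Rdeg) i (f : grhom G H i) x : f (- x) = - f x.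
Proof. by apply: (@addrI _ (f x)); rewrite -hfunD !subrr hf0. Qed.
Lemma hfB (G H : grmod Rdeg) i (f : grhom G H i) x y : f (x - y) = f x - f y.
Proof. by rewrite hfunD hfN. Qed.

Section SubG.
Variables (G : grmod Rdeg) (S : G -> Prop) (HS : gr_submodule S).
Let S0 : S 0. Proof. by case: HS. Qed.
Let SB x y : S x -> S y -> S (x - y). Proof. by case: HS => _ [h _]; apply: h. Qed.
Let Sact x a : S x -> S (@gm_act _ _ _ G x a). Proof. by case: HS => _ [_ [h _]]; apply: h. Qed.
Let Scomp (s : seq int) (x : int -> G) : uniq s -> (forall j, gm_deg j (x j)) ->
    S (\sum_(j <- s) x j) -> forall j, j \in s -> S (x j).
Proof. by case: HS => _ [_ [_ h]]; apply: h. Qed.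
Definition zS : zpred G.
Proof.
refine (@ZPred G (fun x => pb (S x)) _ _).
- by apply/pbE.
- by move=> x y /pbE hx /pbE hy; apply/pbE; apply: SB.
Defined.
Definition sT := subz zS.
Definition sact (x : sT) (a : R) : sT :=
  exist _ (@gm_act _ _ _ G (val x) a) (proj2 (pbE _) (Sact a (proj1 (pbE _) (valP x)))).
Definition sdeg (j : int) (x : sT) := gm_deg j (val x).
Lemma s_act1 (x : sT) : sact x 1 = x.
Proof. by apply: val_inj; rewrite /= gm_act1. Qed.
Lemma s_actA (x : sT) a b : sact (sact x a) b = sact x (a * b).
Proof. by apply: val_inj; rewrite /= gm_actA. Qed.
Lemma s_actDl (x y : sT) a : sact (x + y) a = sact x a + sact y a.
Proof. by apply: val_inj; rewrite /= gm_actDl. Qed.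
Lemma s_actDr (x : sT) a b : sact x (a + b) = sact x a + sact x b.
Proof. by apply: val_inj; rewrite /= gm_actDr. Qed.
Lemma s_deg0 j : sdeg j 0. Proof. exact: gm_deg0. Qed.
Lemma s_degB j (x y : sT) : sdeg j x -> sdeg j y -> sdeg j (x - y).
Proof. exact: gm_degB. Qed.
Lemma s_deg_act i j a (x : sT) : Rdeg i a -> sdeg j x -> sdeg (j + i%:Z) (sact x a).
Proof. exact: gm_deg_act. Qed.
Lemma s_decomp (x : sT) : exists (s : seq int) (y : int -> sT),
  uniq s /\ (forall j, sdeg j (y j)) /\ x = \sum_(j <- s) y j.
Proof.
have [s [y [us [dy ey]]]] := gm_decomp (val x).
have Sy : forall j, j \in s -> S (y j).
  by apply: Scomp => //; rewrite -ey; apply/pbE; apply: (valP x).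
exists s, (fun j => insubd (0 : sT) (y j)); split => //; split.
  move=> j; rewrite /sdeg val_insubd; case: ifP => _ //; exact: gm_deg0.
apply: val_inj; rewrite val_szsum ey; apply: eq_big_seq => j js.
rewrite val_insubd; case: ifP => // /negP []; exact/pbE/Sy.
Qed.
Lemma s_indep (s : seq int) (y : int -> sT) : uniq s ->
  (forall j, sdeg j (y j)) -> \sum_(j <- s) y j = 0 -> forall j, j \in s -> y j = 0.
Proof.
move=> us dy e j js; apply: val_inj.
apply: (@gm_indep _ _ _ G s (fun j => val (y j))) => //.
by rewrite -val_szsum e.
Qed.
Definition subG : grmod Rdeg :=
  @GrMod _ _ Rdeg sT sact sdeg s_act1 s_actA s_actDl s_actDr s_deg0 s_degB s_deg_act s_decomp s_indep.
Definition inclG : grhom subG G 0.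
Proof.
refine (@GrHom _ _ _ subG G 0 (fun x : sT => val x) _ _ _) => //.
by move=> j x h; rewrite addr0.
Defined.
Lemma inclG_inj : injective inclG.
Proof. exact: val_inj. Qed.
Lemma inclG_S (x : G) (h : S x) : exists y : subG, inclG y = x.
Proof. by exists (exist _ x (proj2 (pbE _) h) : sT). Qed.
End SubG.
End Gen2.
Section Main.
Variables (K : fieldType) (R : algType K) (Rdeg : nat -> R -> Prop).
Hypothesis Hgr : positively_graded Rdeg.
Hypothesis Hconn : connected Rdeg.
Hypothesis Hgen : generated_in_degree1 Rdeg.
Hypothesis Hnoeth : noetherian R.
Variable P : R -> Prop.
Hypothesis HPhom : homogeneous_ideal Rdeg P.
Hypothesis HPprime : prime_ideal P.
Hypothesis HPneq : ~ (forall a, P a <-> Rplus Rdeg a).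
Variables (Q : grmod Rdeg) (pi : R -> Q).
Hypothesis Hpi : is_quotient_by P pi.
Variables (E : grmod Rdeg) (iota : grhom Q E 0).
Hypothesis HE : gr_injective_envelope iota.
Variable M : grmod Rdeg.

Lemma Rd0 i : Rdeg i 0. Proof. by case: Hgr. Qed.
Lemma RdD i a b : Rdeg i a -> Rdeg i b -> Rdeg i (a + b). Proof. by case: Hgr => _ [h _]; apply: h. Qed.
Lemma RdZ i (k : K) a : Rdeg i a -> Rdeg i (k *: a). Proof. by case: Hgr => _ [_ [h _]]; apply: h. Qed.
Lemma RdM i j a b : Rdeg i a -> Rdeg j b -> Rdeg (i + j)%N (a * b). Proof. by case: Hgr => _ [_ [_ [h _]]]; apply: h. Qed.
Lemma Rdec a : exists (s : seq nat) (x : nat -> R),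
       uniq s /\ (forall i, Rdeg i (x i)) /\ a = \sum_(i <- s) x i.
Proof. by case: Hgr => _ [_ [_ [_ [h _]]]]; apply: h. Qed.

Lemma P0 : P 0. Proof. by case: HPprime => [[[h _] _] _]. Qed.
Lemma PD a b : P a -> P b -> P (a + b). Proof. by case: HPprime => [[[_ [h _]] _] _]; apply: h. Qed.
Lemma PmulR a r : P a -> P (a * r). Proof. by case: HPprime => [[[_ [_ h]] _] _]; apply: h. Qed.
Lemma PmulL a r : P a -> P (r * a). Proof. by case: HPprime => [[_ [_ [_ h]]] _]; apply: h. Qed.
Lemma PN a : P a -> P (- a). Proof. by move=> h; rewrite -mulN1r; apply: PmulL. Qed.
Lemma PB a b : P a -> P b -> P (a - b). Proof. by move=> ha hb; apply: PD => //; apply: PN. Qed.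
Lemma Psum (I : eqType) (l : seq I) (F : I -> R) : (forall i, i \in l -> P (F i)) -> P (\sum_(i <- l) F i).
Proof.
elim: l => [|a l IH] h; first by rewrite big_nil; apply: P0.
rewrite big_cons; apply: PD; first by apply: h; rewrite inE eqxx.
by apply: IH => i il; apply: h; rewrite inE il orbT.
Qed.
Lemma Pcomp (s : seq nat) (x : nat -> R) : uniq s -> (forall i, Rdeg i (x i)) ->
    P (\sum_(i <- s) x i) -> forall i, i \in s -> P (x i).
Proof. by case: HPhom => _ h; apply: h. Qed.
Lemma Pproper : ~ P 1.
Proof.
case: HPprime => _ [[a ha] _] h1; apply: ha; rewrite -(mul1r a); exact: PmulR.
Qed.

Lemma piD a b : pi (a + b) = pi a + pi b. Proof. by case: Hpi. Qed.
Lemma piM a b : pi (a * b) = gm_act (pi a) b. Proof. by case: Hpi => _ [h _]. Qed.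
Lemma pideg i a : Rdeg i a -> gm_deg i%:Z (pi a). Proof. by case: Hpi => _ [_ [h _]]; apply: h. Qed.
Lemma pisurj q : exists a, pi a = q. Proof. by case: Hpi => _ [_ [_ [h _]]]. Qed.
Lemma piz a : pi a = 0 <-> P a. Proof. by case: Hpi => _ [_ [_ [_ h]]]. Qed.
Lemma pi0 : pi 0 = 0. Proof. by apply/piz; apply: P0. Qed.
Lemma piN a : pi (- a) = - pi a.
Proof. by apply: (@addrI _ (pi a)); rewrite -piD !subrr pi0. Qed.
Lemma piB a b : pi (a - b) = pi a - pi b. Proof. by rewrite piD piN. Qed.
Lemma pisum (I : Type) (l : seq I) (F : I -> R) : pi (\sum_(i <- l) F i) = \sum_(i <- l) pi (F i).
Proof.
elim: l => [|a l IH]; first by rewrite !big_nil pi0.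
by rewrite !big_cons piD IH.
Qed.
Lemma hfsum (G H : grmod Rdeg) i (f : grhom G H i) (I : Type) (l : seq I) (F : I -> G) :
  f (\sum_(j <- l) F j) = \sum_(j <- l) f (F j).
Proof.
elim: l => [|a l IH]; first by rewrite !big_nil hf0.
by rewrite !big_cons hfunD IH.
Qed.
Lemma iota_inj : injective iota. Proof. by case: HE. Qed.
Lemma iota_nz a : ~ P a -> iota (pi a) <> 0.
Proof. by move=> hP h; apply: hP; apply/piz; apply: iota_inj; rewrite h hf0. Qed.
Lemma iota_z a : iota (pi a) <> 0 -> ~ P a.
Proof. by move=> h hP; apply: h; have /piz -> := hP; rewrite hf0. Qed.

Definition liftf (G : grmod Rdeg) (c : nat) (g : nat -> G) (j : int) : G :=
  match j with Posz n => if (c <= n)%N then g (n - c)%N else 0 | Negz _ => 0 end.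
Lemma liftf_deg (G : grmod Rdeg) c (g : nat -> G) :
  (forall n, gm_deg (Posz (c + n)%N) (g n)) -> forall j, gm_deg j (liftf c g j).
Proof.
move=> h [n|n] /=; last exact: gm_deg0.
case: ifP => cn; last exact: gm_deg0.
by have := h (n - c)%N; rewrite subnKC.
Qed.
Lemma liftf_at (G : grmod Rdeg) c (g : nat -> G) n : liftf c g (Posz (c + n)%N) = g n.
Proof. by rewrite /= leq_addr addKn. Qed.
Lemma liftf_sum (G : grmod Rdeg) c (g : nat -> G) l :
  \sum_(n <- l) g n = \sum_(j <- map (fun n => Posz (c + n)%N) l) liftf c g j.
Proof.
rewrite big_map; elim: l => [|a l IH]; first by rewrite !big_nil.
by rewrite !big_cons IH liftf_at.
Qed.
Lemma liftf_uniq c (l : seq nat) : uniq l -> uniq (map (fun n => Posz (c + n)%N) l).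
Proof. by move=> u; rewrite map_inj_uniq // => a b [] /addnI. Qed.
Lemma liftf_cases (G : grmod Rdeg) c (g : nat -> G) j : liftf c g j = 0 \/ exists n, liftf c g j = g n.
Proof. by case: j => [n|n] /=; [case: ifP => _; [right; eexists|left]|left]. Qed.

Section Img.
Variables (k : int) (f : grhom M E k).
Definition img := fun e : E => exists m, f m = e.
Lemma img_sub : gr_submodule img.
Proof.
split; first by exists 0; rewrite hf0.
split; first by move=> _ _ [m <-] [n <-]; exists (m - n); rewrite hfB.
split; first by move=> _ a [m <-]; exists (gm_act m a); rewrite hfunR.
move=> s x us dx [m em] j js.
have [sm [y [usm [dy ey]]]] := gm_decomp m.
have e2 : \sum_(j <- s) x j = \sum_(j <- map (fun j => j + k) sm) f (y (j - k)).
  rewrite -em ey hfsum big_map; apply: eq_big_seq => i _; by rewrite addrK.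
have u2 : uniq (map (fun j => j + k) sm) by rewrite map_inj_uniq // => a b /addIr.
have d2 : forall j, gm_deg j (f (y (j - k))).
  by move=> i; have := hfun_deg f (dy (i - k)); rewrite subrK.
rewrite (comp_eq us u2 dx d2 e2 js); case: ifP => _; first by eexists.
by exists 0; rewrite hf0.
Qed.

Lemma meet m0 : f m0 <> 0 -> exists t i m, Rdeg i t /\ ~ P t /\ f m = iota (pi t).
Proof.
move=> nz.
have [_ [_ ess]] := HE.
have [q [[m hm] qnz]] := ess _ img_sub (ex_intro _ (f m0) (conj (ex_intro _ m0 erefl) nz)).
have [a ea] := pisurj q.
have [s [x [us [dx ex]]]] := Rdec a.
pose g n := iota (pi (x n)).
have dg : forall n, gm_deg (Posz (0 + n)%N) (g n).
  by move=> n; have := hfun_deg iota (pideg (dx n)); rewrite addr0.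
have e1 : iota q = \sum_(j <- map (fun n => Posz (0 + n)%N) s) liftf 0 g j.
  by rewrite -liftf_sum -ea ex pisum hfsum.
have hc := proj2 (proj2 (proj2 img_sub)) _ _ (liftf_uniq 0 us) (liftf_deg dg).
have : exists n, n \in s /\ g n <> 0.
  apply: NNPP => hn; apply: qnz; rewrite e1 big_map big1_seq //= => n ns.
  rewrite add0n subn0; apply: NNPP => gn; apply: hn; by exists n.
move=> [n [ns gn]].
have himg : img (\sum_(j <- map (fun n => Posz (0 + n)%N) s) liftf 0 g j) by rewrite -e1; exists m.
have := hc himg (Posz (0 + n)%N) (map_f _ ns).
rewrite liftf_at => -[m' hm']; exists (x n), n, m'; split => //; split => //.
exact: iota_z.
Qed.
End Img.

Lemma prime_el a b : ~ P a -> ~ P b -> exists r i, Rdeg i r /\ ~ P (a * r * b).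
Proof.
move=> ha hb; apply: NNPP => H.
have H1 : forall r, P (a * r * b).
  move=> r; have [s [x [us [dx ->]]]] := Rdec r.
  rewrite mulr_sumr mulr_suml; apply: Psum => i _.
  apply: NNPP => hn; apply: H; by exists (x i), i.
pose I := fun c => forall r, P (c * r * b).
pose J := fun d => forall c, I c -> P (c * d).
have hI : two_sided_ideal I.
  split; split.
  - by move=> r; rewrite !mul0r; apply: P0.
  - by split; [move=> x y hx hy r; rewrite !mulrDl; apply: PD|move=> x r hx s; have := hx (r * s); rewrite !mulrA].
  - by move=> r; rewrite !mul0r; apply: P0.
  - split; first by move=> x y hx hy r; rewrite !mulrDl; apply: PD.
    by move=> x r hx s; rewrite -!mulrA; apply: PmulL; rewrite mulrA; apply: hx.
have hJ : two_sided_ideal J.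
  split; split.
  - by move=> c _; rewrite mulr0; apply: P0.
  - split; first by move=> x y hx hy c hc; rewrite mulrDr; apply: PD; [apply: hx|apply: hy].
    by move=> x r hx c hc; rewrite mulrA; apply: PmulR; apply: hx.
  - by move=> c _; rewrite mulr0; apply: P0.
  - split; first by move=> x y hx hy c hc; rewrite mulrDr; apply: PD; [apply: hx|apply: hy].
    by move=> x r hx c hc; rewrite mulrA; apply: hx => s; have := hc (r * s); rewrite !mulrA.
case: HPprime => _ [_ pr].
case: (pr I J hI hJ) => [x y hx hy|h|h]; first exact: hy.
- by apply: ha; apply: h => r; apply: H1.
- by apply: hb; apply: (h b) => c hc; have := hc 1; rewrite mulr1.
Qed.
Lemma zexists : exists z d, (0 < d)%N /\ Rdeg d z /\ ~ P z.
Proof.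
have [a ha] : exists a, ~ (P a <-> Rplus Rdeg a).
  by apply: NNPP => h; apply: HPneq => a; apply: NNPP => h2; apply: h; exists a.
case: (classic (P a)) => Pa.
- exfalso; apply: ha; split => // _.
  have [s [x [us [dx ex]]]] := Rdec a.
  have Px : forall i, i \in s -> P (x i) by apply: Pcomp => //; rewrite -ex.
  have x0 : 0%N \in s -> x 0%N = 0.
    move=> s0; have [k hk] := (proj1 (Hconn (x 0%N))) (dx 0%N).
    case: (eqVneq k 0) => [k0|kn0]; first by rewrite hk k0 scale0r.
    exfalso; apply: Pproper.
    have : P (k^-1 *: x 0%N) by rewrite -mulr_algl; apply: PmulL; apply: Px.
    by rewrite hk scalerA mulVf // scale1r.
  exists (filter (fun i => i != 0%N) s), x; split; first exact: filter_uniq.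
  split; first by rewrite mem_filter eqxx.
  split => //; rewrite big_filter ex [LHS](bigID (fun i => i != 0%N)) /=.
  rewrite [X in _ + X]big1_seq ?addr0 //.
  by move=> i /andP [/negPn /eqP -> s0]; exact: x0.
- have Ra : Rplus Rdeg a.
    by apply: NNPP => hR; apply: ha; split => // hh; exfalso; apply: hR.
  case: Ra => s [x [us [s0 [dx ex]]]].
  have [i [iS nPi]] : exists i, i \in s /\ ~ P (x i).
    apply: NNPP => h; apply: Pa; rewrite ex; apply: Psum => i iS.
    by apply: NNPP => hn; apply: h; exists i.
  exists (x i), i; split => //.
  rewrite lt0n; apply/negP => /eqP i0; move: s0; by rewrite -i0 iS.
Qed.

Lemma good_exists : exists a ia, Rdeg ia a /\ ~ P a /\
  forall u iu, Rdeg iu u -> ~ P (u * a) -> forall s, P (u * a * s) -> P (a * s).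
Proof.
have [z [d [_ [dz nPz]]]] := zexists.
apply: NNPP => nG.
pose spec a a2 := (exists u iu, Rdeg iu u /\ a2 = u * a) /\ ~ P a2 /\ exists s, P (a2 * s) /\ ~ P (a * s).
have step : forall a ia, Rdeg ia a -> ~ P a -> exists a2, spec a a2.
  move=> a ia da nPa; apply: NNPP => hn; apply: nG; exists a, ia; split => //; split => // u iu du nPua s Puas.
  apply: NNPP => nPas; apply: hn; exists (u * a); split; first by exists u, iu.
  by split => //; exists s.
pose next a := epsilon (inhabits (0:R)) (spec a).
pose sq n := iter n next z.
have inv : forall n, exists i, Rdeg i (sq n) /\ ~ P (sq n).
  elim=> [|n [i [di nPi]]]; first by exists d.
  have := epsilon_spec (inhabits (0:R)) (spec (sq n)) (step _ _ di nPi).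
  move=> [[u [iu [du eq]]] [nP _]].
  exists (iu + i)%N; split; last exact: nP.
  have -> : sq n.+1 = u * sq n by exact: eq.
  exact: RdM.
have hstep : forall n, spec (sq n) (sq n.+1).
  move=> n; have [i [di nPi]] := inv n.
  exact: (epsilon_spec (inhabits (0:R)) (spec (sq n)) (step _ _ di nPi)).
case: Hnoeth => acc _.
have h1 : forall n, right_ideal (fun s => P (sq n * s)).
  move=> n; split; first by rewrite mulr0; apply: P0.
  split; first by move=> x y hx hy; rewrite mulrDr; apply: PD.
  by move=> x r hx; rewrite mulrA; apply: PmulR.
have h2 : forall n s, P (sq n * s) -> P (sq n.+1 * s).
  by move=> n s hs; have [[u [iu [_ ->]]] _] := hstep n; rewrite -mulrA; exact: PmulL.
have [N HN] := acc (fun n s => P (sq n * s)) h1 h2.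
have [_ [_ [s [Ps nPs]]]] := hstep N.
by apply: nPs; apply: (HN N.+1 (leqnSn N)).
Qed.
Lemma shiftmap a' b (da db : nat) : Rdeg da a' -> Rdeg db b ->
  (forall s, P (a' * s) -> P (b * s)) ->
  exists h : grhom E E (Posz db - Posz da), forall s, h (iota (pi (a' * s))) = iota (pi (b * s)).
Proof.
move=> ha hb hab.
pose C := fun q : Q => exists s, q = pi (a' * s).
have hC : gr_submodule C.
  split; first by exists 0; rewrite mulr0 pi0.
  split; first by move=> _ _ [s1 ->] [s2 ->]; exists (s1 - s2); rewrite mulrBr piB.
  split; first by move=> _ r [s ->]; rewrite /C; exists (s * r); rewrite mulrA [RHS]piM.
  move=> l x ul dx [s es] j jl.
  have [ls [sx [uls [dsx ex]]]] := Rdec s.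
  pose g n := pi (a' * sx n).
  have dg : forall n, gm_deg (Posz (da + n)%N) (g n) by move=> n; apply: pideg; apply: RdM.
  have e2 : \sum_(j <- l) x j = \sum_(j <- map (fun n => Posz (da + n)%N) ls) liftf da g j.
    by rewrite -liftf_sum es ex mulr_sumr pisum.
  rewrite (comp_eq ul (liftf_uniq da uls) dx (liftf_deg dg) e2 jl).
  case: ifP => _; last by exists 0; rewrite mulr0 pi0.
  case: (liftf_cases da g j) => [->|[n ->]]; first by exists 0; rewrite mulr0 pi0.
  by exists (sx n).
have degphi : forall (q : Q) j s, gm_deg j q -> q = pi (a' * s) ->
    gm_deg (j + (Posz db - Posz da)) (pi (b * s)).
  move=> q j s dq eq.
  have [ls [sx [uls [dsx ex]]]] := Rdec s.
  pose g n := pi (a' * sx n).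
  have dg : forall n, gm_deg (Posz (da + n)%N) (g n) by move=> n; apply: pideg; apply: RdM.
  pose y2 := fun i => if i == j then q else 0.
  have e2 : \sum_(i <- map (fun n => Posz (da+n)%N) ls) liftf da g i = \sum_(i <- [:: j]) y2 i.
    by rewrite big_seq1 /y2 eqxx -liftf_sum eq ex mulr_sumr pisum.
  have d2 : forall i, gm_deg i (y2 i).
    by move=> i; rewrite /y2; case: eqP => [->|_] //; exact: gm_deg0.
  rewrite ex mulr_sumr pisum; apply: deg_sum_seq => n nls.
  have := comp_eq (liftf_uniq da uls) (isT : uniq [:: j]) (liftf_deg dg) d2 e2 (map_f _ nls).
  rewrite liftf_at inE; case: eqP => [hj _|_ hz].
  - have -> : j + (Posz db - Posz da) = Posz (db + n)%N by rewrite -hj; lia.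
    by apply: pideg; exact: RdM.
  - have : P (a' * sx n) by apply/piz.
    by move/hab/piz => ->; exact: gm_deg0.
pose G := subG hC.
pose sel (x : G) := epsilon (inhabits (0:R)) (fun s => val x = pi (a' * s)).
have selP : forall x : G, val x = pi (a' * sel x).
  move=> x; apply: (epsilon_spec (inhabits (0:R)) (fun s => val x = pi (a' * s))).
  exact: (proj1 (pbE _) (valP x)).
have wd : forall (x : G) s, val x = pi (a' * s) -> iota (pi (b * sel x)) = iota (pi (b * s)).
  move=> x s e; congr (iota _); apply/eqP; rewrite -subr_eq0 -piB -mulrBr; apply/eqP/piz.
  apply: hab; apply/piz; by rewrite mulrBr piB -selP -e subrr.
have phiD : forall x y : G, iota (pi (b * sel (x + y))) = iota (pi (b * sel x)) + iota (pi (b * sel y)).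
  move=> x y; rewrite -hfunD -piD -mulrDr; apply: wd.
  by rewrite val_szD (selP x) (selP y) -piD mulrDr.
have phiR : forall (x : G) r, iota (pi (b * sel (gm_act x r))) = gm_act (iota (pi (b * sel x))) r.
  move=> x r; rewrite -hfunR -piM -mulrA; apply: wd.
  by rewrite /= (selP x) -piM mulrA.
have phideg : forall j (x : G), gm_deg j x -> gm_deg (j + (Posz db - Posz da)) (iota (pi (b * sel x))).
  move=> j x hx; have := hfun_deg iota (degphi (val x) j (sel x) hx (selP x)).
  by rewrite addr0.
pose phi := @GrHom _ _ _ G E _ (fun x => iota (pi (b * sel x))) phiD phiR phideg.
have [_ [Einj _]] := HE.
set dl := Posz db - Posz da.
have [h1 Hh1] := Einj (shift G (- dl)) (shift Q (- dl)) (shiftH (- dl) (inclG hC)) (@inclG_inj _ _ _ _ _ hC) (toS phi).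
have [h2 Hh2] := Einj (shift Q (- dl)) (shift E (- dl)) (shiftH (- dl) iota) iota_inj h1.
exists (fromS h2) => s.
transitivity (h1 (pi (a' * s))); first exact: Hh2 (pi (a' * s)).
have [y hy] := @inclG_S _ _ _ _ _ hC _ (ex_intro _ s erefl : C (pi (a' * s))).
rewrite -hy; transitivity (toS phi y); first exact: Hh1 y.
exact: wd.
Qed.
Definition NZ (i : int) := exists (g : grhom M E i) m, g m <> 0.

Lemma one0 : Rdeg 0 1.
Proof. by apply/(Hconn 1); exists 1; rewrite scale1r. Qed.

Lemma up k : NZ k -> NZ (k + 1).
Proof.
move=> [f [m0 nz]].
have [t [it [m [dt [nPt hm]]]]] := meet nz.
have [z [d [d0 [dz nPz]]]] := zexists.
have [r [ir [dr nPzrt]]] := prime_el nPz nPt.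
have [y [r' [dy nP]]] : exists y r', Rdeg 1 y /\ ~ P (y * t * r').
  apply: NNPP => H.
  pose L := fun c => forall r', P (c * t * r').
  pose S := fun c => exists κ : K, L (c - κ%:A).
  have L0 : L 0 by move=> r'; rewrite !mul0r; apply: P0.
  have LD : forall x y, L x -> L y -> L (x + y) by move=> x y' hx hy r'; rewrite !mulrDl; apply: PD.
  have LZ : forall (κ : K) x, L x -> L (κ *: x).
    by move=> κ x hx r'; rewrite -!scalerAl -mulr_algl; apply: PmulL.
  have LL : forall c x, L x -> L (c * x).
    by move=> c x hx r'; rewrite -!mulrA; apply: PmulL; rewrite !mulrA.
  have S1 : S 1 by exists 1; rewrite scale1r subrr.
  have SD : forall a b, S a -> S b -> S (a + b).
    move=> a b [k1 h1] [k2 h2]; exists (k1 + k2).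
    have -> : a + b - (k1 + k2)%:A = (a - k1%:A) + (b - k2%:A) by rewrite scalerDl opprD addrACA.
    exact: LD.
  have SZ : forall (c : K) a, S a -> S (c *: a).
    move=> c a [k1 h1]; exists (c * k1).
    have -> : c *: a - (c * k1)%:A = c *: (a - k1%:A) by rewrite scalerBr scalerA.
    exact: LZ.
  have SM : forall a b, S a -> S b -> S (a * b).
    move=> a b [k1 h1] [k2 h2]; exists (k1 * k2).
    have -> : a * b - (k1 * k2)%:A = a * (b - k2%:A) + k2 *: (a - k1%:A).
      by rewrite mulrBr mulr_algr scalerBr scalerA [k2 * k1]mulrC addrA subrK.
    by apply: LD; [apply: LL|apply: LZ].
  have S1d : forall a, Rdeg 1 a -> S a.
    move=> a da; exists 0; rewrite scale0r subr0 => r'.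
    by apply: NNPP => hn; apply: H; exists a, r'.
  have [κ hκ] := Hgen S1 SD SZ SM S1d (z * r).
  have := hκ 1; rewrite mulr1 mulrBl mulr_algl => hP.
  set N := (d + ir + it)%N.
  pose x := fun n => if n == N then z * r * t else if n == it then (- κ) *: t else 0.
  have ux : uniq [:: N; it] by rewrite /= inE andbT; apply/eqP; rewrite /N; lia.
  have dx : forall n, Rdeg n (x n).
    move=> n; rewrite /x; case: eqP => [->|_]; first by apply: RdM => //; apply: RdM.
    case: eqP => [->|_]; [exact: RdZ|exact: Rd0].
  have sx : \sum_(n <- [:: N; it]) x n = z * r * t - κ *: t.
    rewrite big_cons big_seq1 /x eqxx.
    have -> : (it == N) = false by apply/eqP; rewrite /N; lia.
    by rewrite eqxx scaleNr.
  apply: nPzrt; have := Pcomp ux dx; rewrite sx => /(_ hP N).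
  by rewrite /x eqxx inE eqxx; apply.
have [h Hh] := shiftmap one0 dy (fun s (hs : P (1 * s)) => PmulL y (eq_ind _ P hs _ (mul1r s))).
have -> : k + 1 = k + (Posz 1 - Posz 0) by rewrite subr0.
exists (compH f h), (gm_act m r').
rewrite /= hfunR hm -hfunR -piM -[t * r']mul1r Hh mulrA; exact: iota_nz.
Qed.

Lemma down k : NZ k -> exists D : nat, (0 < D)%N /\ NZ (k - Posz D).
Proof.
move=> [f [m0 nz]].
have [t [it [m [dt [nPt hm]]]]] := meet nz.
have [z [d [d0 [dz nPz]]]] := zexists.
have [a [ia [da [nPa good]]]] := good_exists.
have [r1 [i1 [dr1 nP1]]] := prime_el nPt nPz.
have [r2 [i2 [dr2 nP2]]] := prime_el nP1 nPa.
set u := t * r1 * z * r2.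
have du : Rdeg (it + i1 + d + i2)%N u by apply: RdM => //; apply: RdM => //; apply: RdM.
have hab : forall s, P (u * a * s) -> P (a * s) := good _ _ du nP2.
have [h Hh] := shiftmap (RdM du da) da hab.
exists (it + i1 + d + i2)%N; split; first by lia.
have -> : k - Posz (it + i1 + d + i2)%N = k + (Posz ia - Posz (it + i1 + d + i2 + ia)%N) by lia.
exists (compH f h), (gm_act m (r1 * z * r2 * a)).
rewrite /= hfunR hm -hfunR -piM.
have -> : t * (r1 * z * r2 * a) = u * a * 1 by rewrite mulr1 /u !mulrA.
rewrite Hh mulr1; exact: iota_nz.
Qed.

Lemma NZneg n : NZ (- Posz n) -> NZ 0.
Proof.
elim: n => [|n IH] h; first by move: h; have -> : - Posz 0 = 0 by lia.
apply: IH; have := up h; by have -> : - Posz n.+1 + 1 = - Posz n by lia.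
Qed.

Lemma NZpos n : forall k : nat, (k <= n)%N -> NZ (Posz k) -> NZ 0.
Proof.
elim: n => [|n IH] k hk h; first by (have k0 : k = 0%N by lia); rewrite k0 in h.
have [D [D0 hD]] := down h.
case: (leqP D k) => hDk.
- move: hD; have -> : Posz k - Posz D = Posz (k - D)%N by lia.
  by apply: IH; lia.
- move: hD; have -> : Posz k - Posz D = - Posz (D - k)%N by lia.
  exact: NZneg.
Qed.

Lemma NZ_0 i : NZ i -> NZ 0.
Proof.
case: i => [n|n] h; first exact: (@NZpos n n).
by move: h; rewrite NegzE; apply: NZneg.
Qed.

Lemma main_in : GrHom_zero M E <-> HomBar_zero M E.
Proof.
split => H.
- move=> i f m; apply: NNPP => hne.
  have [g [m' hg]] := NZ_0 (ex_intro _ f (ex_intro _ m hne)).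
  by apply: hg; apply: H.
- by move=> f m; apply: H.
Qed.
End Main.

Unset Implicit Arguments.

Theorem mainTheorem11 (K : fieldType) (R : algType K) (Rdeg : nat -> R -> Prop)
  (Hgr : positively_graded Rdeg) (Hconn : connected Rdeg)
  (Hgen : generated_in_degree1 Rdeg) (Hnoeth : noetherian R)
  (P : R -> Prop) (HPhom : homogeneous_ideal Rdeg P) (HPprime : prime_ideal P)
  (HPneq : ~ (forall a, P a <-> Rplus Rdeg a))
  (Q : grmod Rdeg) (pi : R -> Q) (Hpi : is_quotient_by P pi)
  (E : grmod Rdeg) (iota : grhom Q E 0) (HE : gr_injective_envelope iota)
  (M : grmod Rdeg) :
  GrHom_zero M E <-> HomBar_zero M E.
Proof.
exact: (@main_in K R Rdeg Hgr Hconn Hgen Hnoeth P HPhom HPprime HPneq Q pi Hpi E iota HE M).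
Qed.
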